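(* Let $\ell\ge2$ and let $\lambda$ be an $\ell$-core. Then the $n$-vector $(b_0,\ldots,b_{\ell-1})$ of $\lambda$ equals $\pi_\ell^{-1}(\lambda)$.
   Context: Partitions are in English notation; box $(x,y)$ is in row $x$, column $y$. Hook length of a box: boxes weakly to its right in its row plus boxes strictly below it in its column; an $\ell$-core has no hook length divisible by $\ell$. $n$-vector: set $\lambda_p=0$ for $p$ larger than the number of nonzero parts. For $p\ge1$ let $r_p=\lfloor(\lambda_p-p)/\ell\rfloor+1$ (the region of the box $(p,\lambda_p)$, where region $r$ consists of boxes $(x,y)$ with $(r-1)\ell\le y-x<r\ell$). For $0\le j\le\ell-1$, $b_j=\max\{r_p: p\ge1,\ \lambda_p-p\equiv j\pmod\ell\}$. For $\mathbf{b}=(b_0,\ldots,b_{\ell-1})\in\mathbf{Z}^\ell$ with $\sum b_j=0$, let $X(\mathbf{b})=\{r\ell+j:0\le j\le\ell-1,\ r\in\mathbf{Z},\ r\le b_j\}$ and let $\pi_\ell(\mathbf{b})$ be the partition whose nonzero parts are the positive values of $\#\{y\in\mathbf{Z}\setminus X(\mathbf{b}):y<x\}$, $x\in X(\mathbf{b})$. It is known that $\pi_\ell$ is a bijection from $\{\mathbf{b}\in\mathbf{Z}^\ell:\sum b_j=0\}$ onto the set of $\ell$-cores. *)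

(* Defs.v *)
From mathcomp Require Import all_boot all_order all_algebra.
Set Implicit Arguments. Unset Strict Implicit. Unset Printing Implicit Defensive.
Import Order.TTheory GRing.Theory Num.Theory.
Local Open Scope ring_scope.

Definition is_partition (la : seq nat) : Prop :=
  sorted geq la /\ all (fun k => 0 < k)%N la.

(* lambda_p for p >= 1 (1-indexed rows), 0 beyond the number of nonzero parts *)
Definition part (la : seq nat) (p : nat) : nat := nth 0%N la p.-1.

(* hook length of box (x,y), 1 <= x, 1 <= y <= lambda_x :
   boxes weakly right of it in its row, plus boxes strictly below it in its column *)
Definition hook (la : seq nat) (x y : nat) : nat :=
  ((part la x - y).+1 + count (fun x' => (x < x')%N && (y <= part la x')%N)
                              (iota 1 (size la)))%N.

Definition is_box (la : seq nat) (x y : nat) : bool :=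
  [&& (1 <= x)%N, (x <= size la)%N, (1 <= y)%N & (y <= part la x)%N].

Definition is_core (l : nat) (la : seq nat) : Prop :=
  forall x y, is_box la x y -> ~~ (l %| hook la x y)%N.

(* content lambda_p - p of the last box (p, lambda_p) of row p *)
Definition content (la : seq nat) (p : nat) : int := (part la p)%:Z - p%:Z.

Definition region (l : nat) (la : seq nat) (p : nat) : int :=
  ((content la p) %/ l%:Z)%Z + 1.

Definition is_nvector (l : nat) (la : seq nat) (b : nat -> int) : Prop :=
  forall j, (j < l)%N ->
    (exists p, (0 < p)%N /\ ((content la p) %% l%:Z)%Z = j%:Z /\ region l la p = b j)
    /\ (forall p, (0 < p)%N -> ((content la p) %% l%:Z)%Z = j%:Z -> region l la p <= b j).

(* X(b) = { r*ell + j : 0 <= j <= ell-1, r <= b_j }; since x = (x div ell)*ell + (x mod ell)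
   uniquely, membership is the following test. *)
Definition inX (l : nat) (b : nat -> int) (x : int) : bool :=
  ((x %/ l%:Z)%Z <= b `|(x %% l%:Z)%Z|%N).

Definition minb (l : nat) (b : nat -> int) : int :=
  foldr Num.min (b 0%N) [seq b j | j <- iota 0 l].
Definition maxb (l : nat) (b : nat -> int) : int :=
  foldr Num.max (b 0%N) [seq b j | j <- iota 0 l].

(* Lower window bound L = ell * min_j b_j: every integer y < L lies in X(b). *)
Definition lowX (l : nat) (b : nat -> int) : int := l%:Z * minb l b.
(* Upper window bound U = ell * (max_j b_j + 1): no integer x >= U lies in X(b). *)
Definition highX (l : nat) (b : nat -> int) : int := l%:Z * (maxb l b + 1).

(* #{ y in Z \ X(b) : y < x }  (all y < lowX are in X(b), so only [lowX, x) counts) *)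
Definition gapcount (l : nat) (b : nat -> int) (x : int) : nat :=
  if lowX l b <= x then
    count (fun i : nat => ~~ inX l b (lowX l b + i%:Z)) (iota 0 `|x - lowX l b|%N)
  else 0%N.

(* pi_ell(b): the partition whose nonzero parts are the positive values of gapcount
   on X(b) (only x in [lowX, highX) can be in X(b) with a positive value). *)
Definition pi_l (l : nat) (b : nat -> int) : seq nat :=
  sort geq [seq gapcount l b x |
             x <- [seq lowX l b + i%:Z | i <- iota 0 `|highX l b - lowX l b|%N]
           & inX l b x && (0 < gapcount l b x)%N].

(* Main.v *)
Require Import Defs.
From mathcomp Require Import all_boot all_order all_algebra zify.
Import Order.TTheory GRing.Theory Num.Theory.
Local Open Scope ring_scope.
Set Implicit Arguments. Unset Strict Implicit.

Lemma foldr_max_mem (d : int) s : foldr Num.max d s \in d :: s.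
Proof.
elim: s => [|x s IH] /=; first by rewrite inE.
rewrite maxElt; case: ifP => _; last by rewrite !inE eqxx orbT.
move: IH; rewrite !inE => /orP [->|->] //; by rewrite !orbT.
Qed.

Lemma foldr_max_ub (d : int) s x : x \in d :: s -> x <= foldr Num.max d s.
Proof.
elim: s => [|y s IH] /=; first by rewrite inE => /eqP ->.
rewrite !inE le_max => /or3P [H|/eqP ->|H]; first by rewrite IH ?inE ?H ?orbT.
  by rewrite lexx.
by rewrite IH ?inE ?H ?orbT.
Qed.

Lemma foldr_min_lb (d : int) s x : x \in d :: s -> foldr Num.min d s <= x.
Proof.
elim: s => [|y s IH] /=; first by rewrite inE => /eqP ->.
rewrite !inE ge_min => /or3P [H|/eqP ->|H]; first by rewrite IH ?inE ?H ?orbT.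
  by rewrite lexx.
by rewrite IH ?inE ?H ?orbT.
Qed.

Lemma GL (T : eqType) (P : pred T) (W S : seq T) :
  uniq W -> uniq S -> (forall x, (x \in W) && P x = (x \in S)) -> count P W = size S.
Proof.
move=> uW uS H; rewrite -size_filter; apply: perm_size.
apply: uniq_perm; rewrite ?filter_uniq // => x.
by rewrite mem_filter andbC H.
Qed.

Definition win (A : int) (k : nat) : seq int := [seq A + i%:Z | i <- iota 0 k].

Lemma mem_win (A : int) k (x : int) : (x \in win A k) = (A <= x < A + k%:Z).
Proof.
apply/mapP/idP.
  by move=> [i]; rewrite mem_iota => Hi ->; lia.
move=> H; exists (absz (x - A)%R); rewrite ?mem_iota; lia.
Qed.

Lemma uniq_win A k : uniq (win A k).
Proof.
rewrite map_inj_uniq ?iota_uniq // => i j H; lia.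
Qed.

Definition cnt (P : pred int) (A x : int) := count P (win A (absz (x - A)%R)).

Lemma cnt_split P (A B x : int) : A <= B -> B <= x -> cnt P A x = (cnt P A B + cnt P B x)%N.
Proof.
move=> h1 h2; rewrite /cnt /win.
have -> : (absz (x - A)%R) = (absz (B - A)%R + absz (x - B)%R)%N by lia.
rewrite iotaD map_cat count_cat add0n; congr (_ + _)%N.
rewrite -[X in iota X](addn0) iotaDl -map_comp; congr count.
apply: eq_map => i /=. lia.
Qed.

Lemma cnt_zero P (A x : int) : A <= x -> (forall y, A <= y < x -> ~~ P y) -> cnt P A x = 0%N.
Proof.
move=> Hx H; rewrite /cnt (eq_in_count (a2 := pred0)) ?count_pred0 // => y.
rewrite mem_win => Hy; apply/negbTE; apply: H; lia.
Qed.

Lemma cnt_shift P (A x c : int) : cnt P A x = cnt (fun y => P (y + c)) (A - c) (x - c).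
Proof.
rewrite /cnt /win.
have -> : absz (x - c - (A - c))%R = (absz (x - A)%R) by lia.
rewrite !count_map; apply: eq_count => i /=; congr (P _); lia.
Qed.

Lemma geq_trans' : transitive geq.
Proof. by move=> a b c h1 h2; apply: leq_trans h2 h1. Qed.

Lemma part_mono la p q : is_partition la -> (0 < p)%N -> (p <= q)%N -> (part la q <= part la p)%N.
Proof.
move=> [Hs Hp] p0 pq; rewrite /part.
case: (ltnP q.-1 (size la)) => Hq; last by rewrite nth_default.
have := sorted_leq_nth geq_trans' (fun x => leqnn x) 0%N Hs.
move=> /(_ p.-1 q.-1); rewrite !inE => H; apply: H; try lia.
Qed.

Lemma part_pos la p : is_partition la -> (0 < p)%N -> (p <= size la)%N -> (0 < part la p)%N.
Proof.
move=> [Hs Hp] p0 pn; rewrite /part; apply: (allP Hp); apply: mem_nth; by case: p p0 pn.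
Qed.

Lemma part_out la p : (size la < p)%N -> part la p = 0%N.
Proof. move=> H; rewrite /part nth_default //; lia. Qed.

Lemma content_dec la p q : is_partition la -> (0 < p)%N -> (p <= q)%N ->
  content la q + (q - p)%N%:Z <= content la p.
Proof.
move=> H p0 pq; have := part_mono H p0 pq; rewrite /content; lia.
Qed.

Lemma content_inj la p q : is_partition la -> (0 < p)%N -> (0 < q)%N ->
  content la p = content la q -> p = q.
Proof.
move=> H p0 q0 E; case: (ltngtP p q) => // pq.
  have := content_dec H p0 (ltnW pq); lia.
have := content_dec H q0 (ltnW pq); lia.
Qed.

Lemma content_ge la p : -(p%:Z) <= content la p.
Proof. rewrite /content; lia. Qed.

Lemma content_ge1 la p : is_partition la -> (0 < p)%N -> (p <= size la)%N ->
  1 - (p%:Z) <= content la p.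
Proof. move=> H p0 pn; have := part_pos H p0 pn; rewrite /content; lia. Qed.

Lemma content_out la p : (size la < p)%N -> content la p = - (p%:Z).
Proof. move=> H; rewrite /content part_out //; lia. Qed.

Definition CS la := [seq content la p | p <- iota 1 (size la)].
Definition isS la (z : int) := (z < - (size la)%:Z) || (z \in CS la).

Lemma isS_content la p : (0 < p)%N -> isS la (content la p).
Proof.
move=> p0; rewrite /isS; case: (leqP p (size la)) => pn.
  by rewrite map_f ?orbT // mem_iota; lia.
by rewrite content_out //; apply/orP; left; lia.
Qed.

Lemma isS_inv la z : isS la z -> exists p, (0 < p)%N /\ content la p = z.
Proof.
rewrite /isS => /orP [H|/mapP [p]]; last by rewrite mem_iota => Hp ->; exists p; split => //; lia.
exists (absz (- z)%R); split; first lia.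
rewrite content_out; lia.
Qed.

Lemma isS_ge la z : is_partition la -> isS la z -> (- (size la)%:Z <= z) -> 1 - (size la)%:Z <= z.
Proof.
move=> H; rewrite /isS => /orP [h|/mapP [p]]; first lia.
rewrite mem_iota => Hp -> _; have := content_ge1 H (_ : (0 < p)%N) (_ : (p <= size la)%N); lia.
Qed.

Lemma count_between (a b m : nat) : (a < b)%N -> (b <= m.+1)%N ->
  count (fun x => (a < x < b)%N) (iota 1 m) = (b - a.+1)%N.
Proof.
move=> ab bm.
rewrite (GL (S := iota a.+1 (b - a.+1))) ?size_iota ?iota_uniq // => x.
rewrite !mem_iota; lia.
Qed.

Lemma closure l la p : (0 < l)%N -> is_partition la -> is_core l la -> (0 < p)%N ->
  isS la (content la p - l%:Z).
Proof.
move=> l0 H Hc p0.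
set t := content la p - l%:Z.
have tE : t = content la p - l%:Z by [].
clearbody t.
apply/idPn => /negP St.
have pn : (p <= size la)%N.
  rewrite leqNgt; apply/negP => pn; apply: St.
  by rewrite /isS tE content_out //; apply/orP; left; lia.
have ex : exists q, (p < q)%N && (content la q < t).
  exists (size la + 1 + absz t)%N; rewrite content_out; lia.
pose q := ex_minn ex.
have [Hq1 Hq2] : (p < q)%N /\ content la q < t.
  by rewrite /q; case: ex_minnP => m /andP [].
have Hqmin : forall q', (p < q')%N -> content la q' < t -> (q <= q')%N.
  by rewrite /q; case: ex_minnP => m _ Hm q' h1 h2; apply: Hm; rewrite h1 h2.
have Hbet : forall q', (p < q' < q)%N -> t < content la q'.
  move=> q' /andP [h1 h2]; case: (ltP t (content la q')) => // hle; exfalso.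
  rewrite le_eqVlt in hle; case/orP: hle => [/eqP E|hlt].
    apply: St; rewrite -E; apply: isS_content; lia.
  have := Hqmin q' h1 hlt; lia.
have Hq1t : t < content la q.-1.
  case: (ltngtP p q.-1) => h.
  - apply: Hbet; lia.
  - lia.
  - by rewrite -h; lia.
have C : forall x', (p <= x')%N -> (x' < q)%N -> t + q%:Z <= (part la x')%:Z.
  move=> x' h1 h2; have := content_dec H (_ : (0 < x')%N) (_ : (x' <= q.-1)%N).
  rewrite /content in Hq1t *; lia.
have Cq : (part la q)%:Z < t + q%:Z by move: Hq2; rewrite /content; lia.
have tq : 1 <= t + q%:Z by have := content_ge la q; lia.
pose y := absz (t + q%:Z)%R.
have yE : y%:Z = t + q%:Z by rewrite /y; lia.
clearbody y.
have Hbox : is_box la p y.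
  rewrite /is_box; have := C p (leqnn p) Hq1; lia.
have qn : (q.-1 <= size la)%N.
  case: (leqP q.-1 (size la)) => // h; have := C q.-1; rewrite part_out //; lia.
have Hh : hook la p y = l.
  rewrite /hook.
  rewrite (eq_in_count (a2 := fun x => (p < x < q)%N)); last first.
    move=> x0; have [x ->] : exists x : nat, x0 = x by exists x0.
    rewrite mem_iota => hx.
    case: (ltnP x q) => xq; first by rewrite andbT; case: (ltnP p x) => //= px; have := C x; lia.
    rewrite andbF; apply/negbTE; rewrite negb_and -ltnNge; apply/orP; right.
    have := part_mono H (leq_ltn_trans (leq0n p) Hq1) xq; lia.
  rewrite count_between; last by lia.
    have := C p (leqnn p) Hq1; move: tE; rewrite /content; lia.
  done.
have := Hc p y Hbox; by rewrite Hh dvdnn.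
Qed.

Lemma isS_downk l la z k : (0 < l)%N -> is_partition la -> is_core l la ->
  isS la z -> isS la (z - (k * l)%N%:Z).
Proof.
move=> l0 H Hc Sz; elim: k => [|k IH]; first by rewrite mul0n subr0.
have [p [p0 E]] := isS_inv IH.
have -> : z - (k.+1 * l)%N%:Z = content la p - l%:Z by rewrite E; lia.
exact: closure.
Qed.

Lemma isS_down l la z w : (0 < l)%N -> is_partition la -> is_core l la ->
  isS la z -> w <= z -> (w %% l%:Z)%Z = (z %% l%:Z)%Z -> isS la w.
Proof.
move=> l0 H Hc Sz wz E.
have dz := divz_eq z l%:Z; have dw := divz_eq w l%:Z.
have d : z - w = ((z %/ l%:Z)%Z - (w %/ l%:Z)%Z) * l%:Z by lia.
have ge : (w %/ l%:Z <= z %/ l%:Z)%Z by nia.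
have -> : w = z - ((absz ((z %/ l%:Z)%Z - (w %/ l%:Z)%Z)) * l)%N%:Z by nia.
exact: isS_downk.
Qed.

Definition ee (l : nat) (la : seq nat) (j : nat) : int :=
  - ((size la).+1)%:Z - ((- ((size la).+1)%:Z - j%:Z) %% l%:Z)%Z.

Lemma ee_prop l la j : (0 < l)%N -> (j < l)%N ->
  [/\ ee l la j < - (size la)%:Z, - (size la)%:Z - l%:Z <= ee l la j &
      (ee l la j %% l%:Z)%Z = j%:Z].
Proof.
move=> l0 jl; rewrite /ee; split.
- have := modz_ge0 (- ((size la).+1)%:Z - j%:Z) (_ : l%:Z != 0); lia.
- have := ltz_pmod (- ((size la).+1)%:Z - j%:Z) (_ : 0 < l%:Z); lia.
- set u := (- ((size la).+1)%:Z - j%:Z).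
  have du := divz_eq u l%:Z.
  have -> : - ((size la).+1)%:Z - (u %% l%:Z)%Z = (u %/ l%:Z)%Z * l%:Z + j%:Z by rewrite /u in du *; lia.
  rewrite modzMDl modz_small //; lia.
Qed.

Lemma res_le (l : nat) (z w : int) : (0 < l)%N -> (z %% l%:Z)%Z = (w %% l%:Z)%Z ->
  z < w + l%:Z -> z <= w.
Proof.
move=> l0 E h.
have dz := divz_eq z l%:Z; have dw := divz_eq w l%:Z.
have hq : (z %/ l%:Z <= w %/ l%:Z)%Z.
  rewrite leNgt; apply/negP => hlt.
  have : ((w %/ l%:Z)%Z + 1) * l%:Z <= (z %/ l%:Z)%Z * l%:Z by rewrite ler_pM2r //; lia.
  lia.
have : (z %/ l%:Z)%Z * l%:Z <= (w %/ l%:Z)%Z * l%:Z by rewrite ler_pM2r //; lia.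
lia.
Qed.

Definition zmax (l : nat) (la : seq nat) (j : nat) : int :=
  foldr Num.max (ee l la j) [seq z <- CS la | (z %% l%:Z)%Z == j%:Z].

Lemma zmax_in l la j : (0 < l)%N -> (j < l)%N ->
  isS la (zmax l la j) /\ (zmax l la j %% l%:Z)%Z = j%:Z.
Proof.
move=> l0 jl; have [e1 e2 e3] := ee_prop la l0 jl.
have := foldr_max_mem (ee l la j) [seq z <- CS la | (z %% l%:Z)%Z == j%:Z].
rewrite -/(zmax l la j) inE => /orP [/eqP ->|].
  by split => //; rewrite /isS e1.
by rewrite mem_filter => /andP [/eqP h1 h2]; split => //; rewrite /isS h2 orbT.
Qed.

Lemma zmax_ee l la j : ee l la j <= zmax l la j.
Proof. by apply: foldr_max_ub; rewrite mem_head. Qed.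

Lemma zmax_ub l la j z : (0 < l)%N -> (j < l)%N -> isS la z -> (z %% l%:Z)%Z = j%:Z ->
  z <= zmax l la j.
Proof.
move=> l0 jl; rewrite /isS => /orP [h|h] E.
  have [e1 e2 e3] := ee_prop la l0 jl.
  apply: le_trans (zmax_ee l la j).
  apply: res_le l0 _ _; first by rewrite E e3.
  lia.
by apply: foldr_max_ub; rewrite inE mem_filter h E eqxx orbT.
Qed.

Definition bvec (l : nat) (la : seq nat) (j : nat) : int := (zmax l la j %/ l%:Z)%Z + 1.

Lemma inX_iff l la x : (0 < l)%N -> is_partition la -> is_core l la ->
  inX l (bvec l la) x = isS la (x - l%:Z).
Proof.
move=> l0 H Hc; rewrite /inX /bvec.
set r := absz (x %% l%:Z)%Z.
have rE : r%:Z = (x %% l%:Z)%Z by rewrite /r; have := modz_ge0 x (_ : l%:Z != 0); lia.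
have rl : (r < l)%N by have := ltz_pmod x (_ : 0 < l%:Z); lia.
have [Z1 Z2] := zmax_in la l0 rl.
have dx := divz_eq x l%:Z; have dz := divz_eq (zmax l la r) l%:Z.
have m0 := modz_ge0 x (_ : l%:Z != 0).
have m1 := ltz_pmod x (_ : 0 < l%:Z).
apply/idP/idP => h.
  apply: (isS_down l0 H Hc Z1); first nia.
  rewrite Z2.
  have -> : x - l%:Z = ((x %/ l%:Z)%Z - 1) * l%:Z + r%:Z by lia.
  rewrite modzMDl modz_small //; lia.
have := zmax_ub l0 rl h (_ : ((x - l%:Z) %% l%:Z)%Z = r%:Z).
have -> : x - l%:Z = ((x %/ l%:Z)%Z - 1) * l%:Z + r%:Z by lia.
rewrite modzMDl modz_small; last by lia.
move=> /(_ erefl) hle; nia.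
Qed.

Lemma div_le (l : nat) (z w : int) : (0 < l)%N -> (z %% l%:Z)%Z = (w %% l%:Z)%Z ->
  z <= w -> (z %/ l%:Z <= w %/ l%:Z)%Z.
Proof.
move=> l0 E h.
have dz := divz_eq z l%:Z; have dw := divz_eq w l%:Z.
rewrite leNgt; apply/negP => hlt.
have : ((w %/ l%:Z)%Z + 1) * l%:Z <= (z %/ l%:Z)%Z * l%:Z by rewrite ler_pM2r //; lia.
lia.
Qed.

Lemma nvec l la : (0 < l)%N -> is_partition la -> is_core l la -> is_nvector l la (bvec l la).
Proof.
move=> l0 H Hc j jl; have [Z1 Z2] := zmax_in la l0 jl; split.
  have [p [p0 E]] := isS_inv Z1.
  by exists p; rewrite /region /bvec E Z2.
move=> p p0 E; rewrite /region /bvec lerD2r.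
apply: div_le => //; first by rewrite E Z2.
exact: zmax_ub l0 jl (isS_content la p0) E.
Qed.

Lemma div_ge (l : nat) (a z : int) : (0 < l)%N -> a * l%:Z <= z -> a <= (z %/ l%:Z)%Z.
Proof.
move=> l0 h; have dz := divz_eq z l%:Z; have m1 := ltz_pmod z (_ : 0 < l%:Z).
rewrite leNgt; apply/negP => hlt.
have : ((z %/ l%:Z)%Z + 1) * l%:Z <= a * l%:Z by rewrite ler_pM2r //; lia.
lia.
Qed.

Lemma mul_le (l : nat) (a b : int) : a <= b -> a * l%:Z <= b * l%:Z.
Proof. by move=> h; rewrite ler_wpM2r. Qed.

Lemma uniq_CS la : is_partition la -> uniq (CS la).
Proof.
move=> H; rewrite map_inj_in_uniq ?iota_uniq // => p q.
rewrite !mem_iota => hp hq; apply: content_inj => //; lia.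
Qed.

Lemma mem_CS la z : is_partition la -> z \in CS la ->
  exists p, [/\ (0 < p)%N, (p <= size la)%N & content la p = z].
Proof. by move=> H /mapP [p]; rewrite mem_iota => hp ->; exists p; split => //; lia. Qed.

Lemma isS_ltB l la z : (0 < l)%N -> is_partition la -> isS la z ->
  z < (l * (part la 1).+1)%N%:Z.
Proof.
move=> l0 H; rewrite /isS => /orP [h|/(mem_CS H) [p [p0 pn <-]]].
  have : (0 <= l * (part la 1).+1)%N by []; lia.
have := content_dec H (_ : (0 < 1)%N) p0; rewrite /content.
have : ((part la 1).+1 <= l * (part la 1).+1)%N by rewrite leq_pmull.
lia.
Qed.

Lemma count_part (l : nat) (P : pred int) (s : seq int) : (0 < l)%N ->
  count P s = (\sum_(j < l) count (fun z => P z && ((z %% l%:Z)%Z == j%:Z)) s)%N.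
Proof.
move=> l0; elim: s => [|x s IH] /=; first by rewrite big1.
rewrite big_split /= -IH; congr (_ + _)%N.
case: (P x) => /=; last by rewrite big1.
set r := absz (x %% l%:Z)%Z.
have rE : r%:Z = (x %% l%:Z)%Z by rewrite /r; have := modz_ge0 x (_ : l%:Z != 0); lia.
have rl : (r < l)%N by have := ltz_pmod x (_ : 0 < l%:Z); lia.
rewrite (bigD1 (Ordinal rl)) //= -rE eqxx big1 // => j /eqP hj.
apply/eqP; rewrite eqb0; apply/eqP => E; apply: hj; apply: val_inj => /=; lia.
Qed.

Lemma sum_bvec l la : (0 < l)%N -> is_partition la -> is_core l la ->
  \sum_(j < l) bvec l la j = 0.
Proof.
move=> l0 H Hc.
set a : int := - ((size la).+1)%:Z.
have aE : a = - ((size la).+1)%:Z by [].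
set A : int := a * l%:Z.
have AE : A = a * l%:Z by [].
set B : int := (l * (part la 1).+1)%N%:Z.
have BE : B = (l * (part la 1).+1)%N%:Z by [].
clearbody a A B.
have AB : A <= B by nia.
have An : A <= - (size la)%:Z - 1 by nia.
set W := win A (absz (B - A)%R).
have Tot : count (isS la) W = (absz (- (size la)%:Z - A)%R + size la)%N.
  rewrite (GL (S := win A (absz (- (size la)%:Z - A)%R) ++ CS la)).
  - by rewrite size_cat /CS /win !size_map !size_iota.
  - exact: uniq_win.
  - rewrite cat_uniq uniq_win uniq_CS // andbT /=.
    apply/hasPn => z /(mem_CS H) [p [p0 pn <-]]; rewrite mem_win.
    have := content_ge1 H p0 pn; lia.
  move=> z0; have [z ->] : exists z : int, z0 = z by exists z0.
  rewrite mem_cat mem_win.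
  case Sz: (isS la z); last first.
    rewrite andbF; apply/esym/negbTE; rewrite negb_or; apply/andP; split.
      move: Sz; rewrite /isS; case: (ltP z (- (size la)%:Z)) => //= hz _; rewrite mem_win; lia.
    by apply/negP => h; move: Sz; rewrite /isS h orbT.
  have zB := isS_ltB l0 H Sz.
  move: Sz; rewrite /isS => /orP [h|h].
    have nCS : z \notin CS la.
      apply/negP => /(mem_CS H) [p [p0 pn E]]; have := content_ge1 H p0 pn; lia.
    rewrite andbT (negbTE nCS) orbF mem_win; apply/idP/idP => /andP [h1 h2]; apply/andP; split; lia.
  rewrite andbT h orbT.
  have [p [p0 pn <-]] := mem_CS H h.
  have := content_ge1 H p0 pn; have := isS_ltB l0 H (isS_content la p0).
  nia.
have Per : forall j : 'I_l, (count (fun z => isS la z && ((z %% l%:Z)%Z == j%:Z)) W)%:Z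
    = bvec l la j - a.
  move=> [j jl] /=.
  have [Z1 Z2] := zmax_in la l0 jl.
  have [e1 e2 e3] := ee_prop la l0 jl.
  have zee := zmax_ee l la j.
  have dz := divz_eq (zmax l la j) l%:Z.
  have ma : a <= (zmax l la j %/ l%:Z)%Z by apply: div_ge => //; nia.
  rewrite (GL (S := [seq (a + i%:Z) * l%:Z + j%:Z | i <- iota 0 (absz ((zmax l la j %/ l%:Z)%Z - a + 1))%R])).
  - rewrite size_map size_iota /bvec; lia.
  - exact: uniq_win.
  - rewrite map_inj_uniq ?iota_uniq // => i i' E.
    have : (a + i%:Z) * l%:Z = (a + i'%:Z) * l%:Z by lia.
    move/mulIf => /(_ _); rewrite /= => h; have := h (_ : l%:Z != 0); lia.
  move=> z; rewrite mem_win.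
  apply/idP/idP.
    move=> /andP [hw /andP [Sz /eqP Ez]].
    have dzz := divz_eq z l%:Z.
    have h1 : a <= (z %/ l%:Z)%Z by apply: div_ge => //; lia.
    have h2 : (z %/ l%:Z <= zmax l la j %/ l%:Z)%Z.
      apply: div_le => //; first by rewrite Ez Z2.
      exact: zmax_ub l0 jl Sz Ez.
    apply/mapP; exists (absz ((z %/ l%:Z)%Z - a)%R); first by rewrite mem_iota; lia.
    lia.
  move=> /mapP [i]; rewrite mem_iota => hi ->.
  have Ez : (((a + i%:Z) * l%:Z + j%:Z) %% l%:Z)%Z = j%:Z.
    by rewrite modzMDl modz_small //; lia.
  have hle : (a + i%:Z) * l%:Z + j%:Z <= zmax l la j.
    have : (a + i%:Z) * l%:Z <= (zmax l la j %/ l%:Z)%Z * l%:Z by apply: mul_le; lia.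
    rewrite Z2 in dz; lia.
  have Sz : isS la ((a + i%:Z) * l%:Z + j%:Z).
    by apply: (isS_down l0 H Hc Z1) => //; rewrite Ez Z2.
  rewrite Sz Ez eqxx andbT /=.
  have := isS_ltB l0 H Sz.
  have : A <= (a + i%:Z) * l%:Z by rewrite AE; apply: mul_le; lia.
  lia.
have E : \sum_(j < l) bvec l la j = \sum_(j < l) ((count (fun z => isS la z && ((z %% l%:Z)%Z == j%:Z)) W)%:Z + a).
  by apply: eq_bigr => j _; rewrite Per; lia.
rewrite E big_split /= sumr_const card_ord.
rewrite -(big_morph Posz PoszD (erefl (Posz 0))) -count_part // Tot.
lia.
Qed.

Lemma gapcountE l b x : gapcount l b x =
  if lowX l b <= x then cnt (fun y => ~~ inX l b y) (lowX l b) x else 0%N.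
Proof. by rewrite /gapcount /cnt /win count_map. Qed.

Lemma lowX_in l b y : (0 < l)%N -> y < lowX l b -> inX l b y.
Proof.
move=> l0 hy; rewrite /inX.
set r := absz (y %% l%:Z)%Z.
have rl : (r < l)%N by rewrite /r; have := ltz_pmod y (_ : 0 < l%:Z); have := modz_ge0 y (_ : l%:Z != 0); lia.
have hm : minb l b <= b r by apply: foldr_min_lb; rewrite inE map_f ?orbT // mem_iota; lia.
have dy := divz_eq y l%:Z; have m0 := modz_ge0 y (_ : l%:Z != 0).
suff : (y %/ l%:Z)%Z < minb l b by lia.
rewrite ltNge; apply/negP => h.
have : minb l b * l%:Z <= (y %/ l%:Z)%Z * l%:Z by apply: mul_le.
move: hy; rewrite /lowX; lia.
Qed.

Lemma highX_gt l b x : (0 < l)%N -> inX l b x -> x < highX l b.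
Proof.
move=> l0; rewrite /inX => hx.
set r := absz (x %% l%:Z)%Z.
have rl : (r < l)%N by rewrite /r; have := ltz_pmod x (_ : 0 < l%:Z); have := modz_ge0 x (_ : l%:Z != 0); lia.
have hm : b r <= maxb l b by apply: foldr_max_ub; rewrite inE map_f ?orbT // mem_iota; lia.
have dx := divz_eq x l%:Z; have m1 := ltz_pmod x (_ : 0 < l%:Z).
have : ((x %/ l%:Z)%Z + 1) * l%:Z <= (maxb l b + 1) * l%:Z by apply: mul_le; rewrite -/r in hx; lia.
rewrite /highX; lia.
Qed.

Lemma cnt_S la p : is_partition la -> (0 < p)%N -> (p <= size la)%N ->
  cnt (predC (isS la)) (- (size la)%:Z) (content la p) = part la p.
Proof.
move=> H p0 pn.
have c1 := content_ge1 H p0 pn.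
rewrite /cnt; set w := win _ _.
have Hs := count_predC (isS la) w.
rewrite (GL (S := [seq content la q | q <- iota p.+1 (size la - p)])) in Hs.
- move: Hs; rewrite /w /win !size_map !size_iota /content in c1 *; lia.
- exact: uniq_win.
- rewrite map_inj_in_uniq ?iota_uniq // => q q'; rewrite !mem_iota => h1 h2.
  apply: content_inj => //; lia.
move=> z0; have [z ->] : exists z : int, z0 = z by exists z0.
rewrite /w mem_win; apply/idP/idP.
  move=> /andP [hw]; rewrite /isS => /orP [h|/(mem_CS H) [q [q0 qn E]]]; first lia.
  rewrite -E; apply: map_f; rewrite mem_iota.
  case: (leqP q p) => hq; last by lia.
  have := content_dec H q0 hq; lia.
move=> /mapP [q]; rewrite mem_iota => hq ->.
rewrite isS_content ?andbT; last by lia.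
have := content_dec H p0 (_ : (p <= q)%N); have := content_ge1 H (_ : (0 < q)%N) (_ : (q <= size la)%N).
lia.
Qed.

Lemma gap_p l la p : (0 < l)%N -> is_partition la -> is_core l la ->
  (0 < p)%N -> (p <= size la)%N ->
  lowX l (bvec l la) <= content la p + l%:Z /\
  gapcount l (bvec l la) (content la p + l%:Z) = part la p.
Proof.
move=> l0 H Hc p0 pn.
set b := bvec l la.
set x := content la p + l%:Z.
have c1 := content_ge1 H p0 pn.
have G1 : cnt (fun y => ~~ inX l b y) (l%:Z - (size la)%:Z) x = part la p.
  rewrite (cnt_shift _ _ _ l%:Z).
  have -> : l%:Z - (size la)%:Z - l%:Z = - (size la)%:Z by lia.
  have -> : x - l%:Z = content la p by rewrite /x; lia.
  rewrite -(cnt_S H p0 pn) /cnt; apply: eq_count => y /=.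
  by rewrite /b inX_iff // addrK.
have pp := part_pos H p0 pn.
have Lx : lowX l b <= x.
  rewrite leNgt; apply/negP => hlt.
  move: G1; rewrite cnt_zero; first lia.
    rewrite /x; lia.
  move=> y hy; rewrite negbK; apply: lowX_in => //; lia.
split => //.
rewrite gapcountE Lx -G1.
have inl : forall y, y < l%:Z - (size la)%:Z -> inX l b y.
  move=> y hy; rewrite /b inX_iff // /isS; apply/orP; left; lia.
case: (leP (lowX l b) (l%:Z - (size la)%:Z)) => h.
  rewrite (cnt_split _ h); last by rewrite /x; lia.
  rewrite cnt_zero // => y hy; rewrite negbK; apply: inl; lia.
rewrite [in RHS](cnt_split _ (ltW h) Lx) [in RHS]cnt_zero //; first by apply: ltW.
move=> y hy; rewrite negbK; apply: lowX_in => //; lia.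
Qed.

Lemma gap_zero l la x : (0 < l)%N -> is_partition la -> is_core l la ->
  x - l%:Z < - (size la)%:Z -> gapcount l (bvec l la) x = 0%N.
Proof.
move=> l0 H Hc hx; rewrite gapcountE; case: ifP => // h.
apply: cnt_zero => // y hy; rewrite negbK inX_iff // /isS; apply/orP; left; lia.
Qed.

Lemma pi_eq l la : (0 < l)%N -> is_partition la -> is_core l la -> pi_l l (bvec l la) = la.
Proof.
move=> l0 H Hc.
set b := bvec l la.
have P1 : perm_eq [seq x <- [seq lowX l b + i%:Z | i <- iota 0 `|highX l b - lowX l b|%N]
                   | inX l b x && (0 < gapcount l b x)%N]
                  [seq content la p + l%:Z | p <- iota 1 (size la)].
  apply: uniq_perm.
  - rewrite filter_uniq //; exact: uniq_win.
  - rewrite map_inj_in_uniq ?iota_uniq // => p q; rewrite !mem_iota => hp hq E.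
    apply: (content_inj H); [lia | lia | exact: (addIr _ E)].
  move=> x0; have [x ->] : exists x : int, x0 = x by exists x0.
  rewrite mem_filter; apply/idP/idP.
    move=> /andP [/andP [hX hg] hw].
    move: hX; rewrite /b inX_iff // /isS => /orP [h|/(mem_CS H) [p [p0 pn E]]].
      by move: hg; rewrite gap_zero.
    apply/mapP; exists p; first by rewrite mem_iota; lia.
    by rewrite E subrK.
  move=> /mapP [p]; rewrite mem_iota => hp ->.
  have p0 : (0 < p)%N by lia.
  have pn : (p <= size la)%N by lia.
  have [Lx G] := gap_p l0 H Hc p0 pn.
  have hX : inX l b (content la p + l%:Z) by rewrite /b inX_iff // addrK isS_content.
  rewrite hX G part_pos //=.
  have := highX_gt l0 hX.
  have := mem_win (lowX l b) (absz (highX l b - lowX l b)%R) (content la p + l%:Z).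
  rewrite /win => ->; rewrite -/b in Lx; lia.
have P2 : [seq gapcount l b x | x <- [seq content la p + l%:Z | p <- iota 1 (size la)]] = la.
  rewrite -map_comp; transitivity [seq part la p | p <- iota 1 (size la)].
    apply/eq_in_map => p; rewrite mem_iota => hp /=.
    apply: (gap_p l0 H Hc _ _).2; lia.
  rewrite (_ : iota 1 (size la) = [seq i.+1 | i <- iota 0 (size la)]); last by rewrite -(iotaDl 1 0).
  rewrite -map_comp; exact: mkseq_nth.
rewrite /pi_l; transitivity (sort geq la); last exact: (sorted_sort geq_trans' H.1).
apply/perm_sortP.
- by move=> x y; apply: leq_total.
- exact: geq_trans'.
- by move=> x y /andP [h1 h2]; apply: anti_leq; rewrite /= in h1 h2; rewrite h1 h2.
rewrite -[X in perm_eq _ X]P2; exact: perm_map.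
Qed.

Theorem mainTheorem6 (l : nat) (la : seq nat) :
  (2 <= l)%N -> is_partition la -> is_core l la ->
  exists b : nat -> int,
    is_nvector l la b /\ \sum_(j < l) b j = 0 /\ pi_l l b = la.
Proof.
move=> l2 H Hc.
have l0 : (0 < l)%N by lia.
exists (bvec l la); split; first exact: nvec.
split; first exact: sum_bvec.
exact: pi_eq.
Qed.
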